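(* Let $\mathbb V$ be the 2-vector space of a 2-term complex $V_1\xrightarrow{\mathrm d}V_0$, and let $L=\{X+\pi(\xi)+\xi:X\in\mathcal D,\xi\in\mathcal D^0\}$ be a Dirac structure of the omni-Lie 2-algebra $\mathfrak{gl}(\mathbb V)\oplus\mathbb V$ with characteristic pair $(\mathcal D,\pi)$, and equip $\mathcal D^0$ with the strict Lie 2-algebra bracket $[\xi,\eta]_{\mathcal D^0}=\pi(\xi)(\eta)$. Then an element $N\in\mathfrak{gl}(\mathbb V)$ lies in the normalizer $N_L$ if and only if (1) $[N,X]\in\mathcal D$ for all $X\in\mathcal D$, and (2) for all $\xi,\eta\in\mathcal D^0$, $N(\xi)\in\mathcal D^0$ and $N([\xi,\eta]_{\mathcal D^0})=[\xi,N(\eta)]_{\mathcal D^0}+[N(\xi),\eta]_{\mathcal D^0}$.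
   Context: All vector spaces are finite-dimensional over $\mathbb R$. For a 2-term complex $V_1\xrightarrow{\mathrm d}V_0$, $\mathbb V$ has objects $V_0$, morphisms $V_0\oplus V_1$ ($u+m$), $s(u+m)=u$, $t(u+m)=u+\mathrm dm$. Let $\mathrm{End}^0_{\mathrm d}(\mathbb V)=\{A=(A_0,A_1):A_0\mathrm d=\mathrm dA_1\}$, $\mathrm{End}^1(\mathbb V)=\mathrm{Hom}(V_0,V_1)$, $\delta\phi=(\mathrm d\phi,\phi\mathrm d)$; brackets $[A,B]$ componentwise commutator, $[A,\phi]=-[\phi,A]=A_1\phi-\phi A_0$, $[\phi,\psi]_\delta=\phi\mathrm d\psi-\psi\mathrm d\phi$. The strict Lie 2-algebra $\mathfrak{gl}(\mathbb V)$ has objects $\mathrm{End}^0_{\mathrm d}(\mathbb V)$, morphisms $A+\phi$, $s(A+\phi)=A$, $t(A+\phi)=A+\delta\phi$, bracket $[A+\phi,B+\psi]=[A,B]+[\phi,\psi]_\delta+[A,\psi]+[\phi,B]$, and acts on $\mathbb V$ by $A(u)=A_0u$, $(A+\phi)(u+m)=A_0u+(A_1m+\phi(u+\mathrm dm))$. The omni-Lie 2-algebra is $\mathfrak{gl}(\mathbb V)\oplus\mathbb V$ with pairing $\langle A+\phi+u+m,B+\psi+v+n\rangle=\tfrac12((A+\phi)(v+n)+(B+\psi)(u+m))$ and bracket $[\![A+\phi+u+m,B+\psi+v+n]\!]=[A+\phi,B+\psi]+\tfrac12((A+\phi)(v+n)-(B+\psi)(u+m))$ (similar formulas on objects), and the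 bracket $\{e_1,e_2\}=[\![e_1,e_2]\!]+\langle e_1,e_2\rangle$, i.e. $\{A+\phi+u+m,B+\psi+v+n\}=[A+\phi,B+\psi]+(A+\phi)(v+n)$. $L^\perp=\{e:\langle e,l\rangle=0\ \forall l\in L\}$; a Dirac structure is a 2-sub-vector space $L=L^\perp$ closed under $[\![\cdot,\cdot]\!]$. Characteristic pair of a maximal isotropic $L$: $\mathcal D=L\cap\mathfrak{gl}(\mathbb V)$, $\mathcal D^0=\{\xi\in\mathbb V:X(\xi)=0\ \forall X\in\mathcal D\}$ (levelwise), and a linear functor $\pi:\mathbb V\to\mathfrak{gl}(\mathbb V)$ with $\pi(\xi)(\eta)=-\pi(\eta)(\xi)$ on $\mathcal D^0$ and $L=\{X+\pi(\xi)+\xi\}$. The normalizer of a 2-sub-vector space $K\subset\mathfrak{gl}(\mathbb V)\oplus\mathbb V$ is $N_K=\{N\in\mathfrak{gl}(\mathbb V):\{N,k\}\in K\ \forall k\in K\}$ (levelwise, $N$ viewed as $N+0$). *)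

(* Defs.v *)
(* Finite-dimensional spaces V0 = R^n0, V1 = R^n1 (column
   vectors), d : V1 -> V0 a matrix; scalars in an arbitrary real field R. *)
From HB Require Import structures.
From mathcomp Require Import all_boot all_order all_algebra.
Set Implicit Arguments. Unset Strict Implicit. Unset Printing Implicit Defensive.
Import GRing.Theory.
Local Open Scope ring_scope.

Section Omni.
Variables (R : realFieldType) (n0 n1 : nat) (d : 'M[R]_(n0, n1)).

(* the 2-vector space V: objects V0, morphisms u+m in V0 (+) V1 *)
Definition V0 := 'cV[R]_n0.
Definition Vmor := ('cV[R]_n0 * 'cV[R]_n1)%type.

(* gl(V): objects A=(A0,A1) (in End^0_d when endo_d holds),
   morphisms A+phi = (A, phi) with phi in Hom(V0,V1) *)
Definition gl0 := ('M[R]_n0 * 'M[R]_n1)%type.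
Definition gl1 := (gl0 * 'M[R]_(n1, n0))%type.

Definition endo_d (A : gl0) : Prop := A.1 *m d = d *m A.2.

Definition delta (phi : 'M[R]_(n1, n0)) : gl0 := (d *m phi, phi *m d).

Definition br_gl0 (A B : gl0) : gl0 :=
  (A.1 *m B.1 - B.1 *m A.1, A.2 *m B.2 - B.2 *m A.2).
Definition br_gl1 (X Y : gl1) : gl1 :=
  let: (A, phi) := X in let: (B, psi) := Y in
  (br_gl0 A B,
   (phi *m d *m psi - psi *m d *m phi)
   + (A.2 *m psi - psi *m A.1) - (B.2 *m phi - phi *m B.1)).

Definition act0 (A : gl0) (u : V0) : V0 := A.1 *m u.
Definition act1 (X : gl1) (xi : Vmor) : Vmor :=
  (X.1.1 *m xi.1, X.1.2 *m xi.2 + X.2 *m (xi.1 + d *m xi.2)).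

(* the omni-Lie 2-algebra gl(V) (+) V: objects E0, morphisms E1 *)
Definition E0 := (gl0 * V0)%type.
Definition E1 := (gl1 * Vmor)%type.

Definition pair0 (e f : E0) : V0 := 2^-1 *: (act0 e.1 f.2 + act0 f.1 e.2).
Definition pair1 (e f : E1) : Vmor := 2^-1 *: (act1 e.1 f.2 + act1 f.1 e.2).

Definition bracket0 (e f : E0) : E0 :=
  (br_gl0 e.1 f.1, 2^-1 *: (act0 e.1 f.2 - act0 f.1 e.2)).
Definition bracket1 (e f : E1) : E1 :=
  (br_gl1 e.1 f.1, 2^-1 *: (act1 e.1 f.2 - act1 f.1 e.2)).

(* {e1,e2} = [[e1,e2]] + <e1,e2> *)
Definition curly0 (e f : E0) : E0 := (br_gl0 e.1 f.1, act0 e.1 f.2).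
Definition curly1 (e f : E1) : E1 := (br_gl1 e.1 f.1, act1 e.1 f.2).

Definition srcE (e : E1) : E0 := (e.1.1, e.2.1).
Definition tgtE (e : E1) : E0 := (e.1.1 + delta e.1.2, e.2.1 + d *m e.2.2).
Definition idE (e : E0) : E1 := ((e.1, 0), (e.2, 0)).

Definition is_subspace (T : lmodType R) (P : T -> Prop) : Prop :=
  P 0 /\ forall (a : R) (x y : T), P x -> P y -> P (a *: x + y).

Definition is_sub2 (L0 : E0 -> Prop) (L1 : E1 -> Prop) : Prop :=
  is_subspace L0 /\ is_subspace L1 /\
  (forall e, L0 e -> endo_d e.1) /\
  (forall e, L1 e -> endo_d e.1.1) /\
  (forall e, L1 e -> L0 (srcE e) /\ L0 (tgtE e)) /\
  (forall e, L0 e -> L1 (idE e)).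

Definition self_perp (L0 : E0 -> Prop) (L1 : E1 -> Prop) : Prop :=
  (forall e, L0 e <-> (endo_d e.1 /\ forall l, L0 l -> pair0 e l = 0)) /\
  (forall e, L1 e <-> (endo_d e.1.1 /\ forall l, L1 l -> pair1 e l = 0)).

Definition is_Dirac (L0 : E0 -> Prop) (L1 : E1 -> Prop) : Prop :=
  [/\ is_sub2 L0 L1, self_perp L0 L1,
      (forall e f, L0 e -> L0 f -> L0 (bracket0 e f))
    & (forall e f, L1 e -> L1 f -> L1 (bracket1 e f))].

(* D = L cap gl(V), levelwise *)
Definition D0 (L0 : E0 -> Prop) (X : gl0) : Prop := L0 (X, 0).
Definition D1 (L1 : E1 -> Prop) (X : gl1) : Prop := L1 (X, 0).

Definition Dann0 (L0 : E0 -> Prop) (u : V0) : Prop :=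
  forall X, D0 L0 X -> act0 X u = 0.
Definition Dann1 (L1 : E1 -> Prop) (xi : Vmor) : Prop :=
  forall X, D1 L1 X -> act1 X xi = 0.

Definition srcV (xi : Vmor) : V0 := xi.1.
Definition tgtV (xi : Vmor) : V0 := xi.1 + d *m xi.2.
Definition idV (u : V0) : Vmor := (u, 0).
Definition srcG (X : gl1) : gl0 := X.1.
Definition tgtG (X : gl1) : gl0 := X.1 + delta X.2.
Definition idG (A : gl0) : gl1 := (A, 0).

Definition char_pair (L0 : E0 -> Prop) (L1 : E1 -> Prop)
  (pi0 : V0 -> gl0) (pi1 : Vmor -> gl1) : Prop :=
  (forall (a : R) u v, pi0 (a *: u + v) = a *: pi0 u + pi0 v) /\
  (forall (a : R) x y, pi1 (a *: x + y) = a *: pi1 x + pi1 y) /\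
  (forall u, endo_d (pi0 u)) /\
  (forall x, srcG (pi1 x) = pi0 (srcV x) /\ tgtG (pi1 x) = pi0 (tgtV x)) /\
  (forall u, pi1 (idV u) = idG (pi0 u)) /\
  (forall u v, Dann0 L0 u -> Dann0 L0 v -> act0 (pi0 u) v = - act0 (pi0 v) u) /\
  (forall x y, Dann1 L1 x -> Dann1 L1 y -> act1 (pi1 x) y = - act1 (pi1 y) x) /\
  (forall e, L0 e <-> exists X u, [/\ D0 L0 X, Dann0 L0 u & e = (X + pi0 u, u)]) /\
  (forall e, L1 e <-> exists X x, [/\ D1 L1 X, Dann1 L1 x & e = (X + pi1 x, x)]).

(* normalizer N_L, levelwise (N viewed as N + 0) *)
Definition normalizer0 (L0 : E0 -> Prop) (N : gl0) : Prop :=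
  forall k, L0 k -> L0 (curly0 (N, 0) k).
Definition normalizer1 (L1 : E1 -> Prop) (N : gl1) : Prop :=
  forall k, L1 k -> L1 (curly1 (N, 0) k).

End Omni.

(* Main.v *)
Require Import Defs.
From HB Require Import structures.
From mathcomp Require Import all_boot all_order all_algebra.
Import GRing.Theory Num.Theory.
Local Open Scope ring_scope.

Lemma perm8 (V : zmodType) (a b c e a' b' c' e' : V) :
  a - a' + ((e - e') + (b - c') - (b' - c)) = (a + b + c + e) - (a' + b' + c' + e').
Proof.
rewrite opprB !opprD !addrA.
by rewrite [LHS](ACl (1*5*7*3*2*8*6*4))%AC.
Qed.

Lemma rep1 (R : realFieldType) n0 n1 (d : 'M[R]_(n0, n1)) (X Y : gl1 R n0 n1) w :
  endo_d d X.1 -> endo_d d Y.1 ->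
  act1 d (br_gl1 d X Y) w = act1 d X (act1 d Y w) - act1 d Y (act1 d X w).
Proof.
case: X => [[A0 A1] f]; case: Y => [[B0 B1] g]; case: w => u m.
rewrite /endo_d /= => hA hB.
rewrite /act1 /br_gl1 /br_gl0 /=.
congr pair; first by rewrite mulmxBl !mulmxA.
set w := u + d *m m.
have Ef : f *m B0 *m w = f *m B0 *m u + f *m d *m B1 *m m.
  by rewrite /w mulmxDr mulmxA -(mulmxA f B0 d) hB mulmxA.
have Eg : g *m A0 *m w = g *m A0 *m u + g *m d *m A1 *m m.
  by rewrite /w mulmxDr mulmxA -(mulmxA g A0 d) hA mulmxA.
have P : A1 *m (B1 *m m + g *m w) + f *m (B0 *m u + d *m (B1 *m m + g *m w))
   = A1 *m B1 *m m + A1 *m g *m w + f *m B0 *m w + f *m d *m g *m w.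
  by rewrite Ef !mulmxDr !mulmxA !addrA.
have Q : B1 *m (A1 *m m + f *m w) + g *m (A0 *m u + d *m (A1 *m m + f *m w))
   = B1 *m A1 *m m + B1 *m f *m w + g *m A0 *m w + g *m d *m f *m w.
  by rewrite Eg !mulmxDr !mulmxA !addrA.
rewrite P Q -perm8.
rewrite (mulmxBl (A1 *m B1)) (mulmxBl (_ + _)) mulmxDl (mulmxBl (f *m d *m g)) (mulmxBl (A1 *m g)) (mulmxBl (B1 *m f)); reflexivity.
Qed.

Lemma generic (R : realFieldType) (G : zmodType) (W : lmodType R)
  (endo : G -> Prop) (br : G -> G -> G) (act : G -> W -> W)
  (L : (G * W)%type -> Prop) (pi : W -> G)
  (Hact0 : forall A, act A 0 = 0)
  (HactD : forall A B w, act (A + B) w = act A w + act B w)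
  (Hrep : forall A B w, endo A -> endo B ->
     act (br A B) w = act A (act B w) - act B (act A w))
  (HendoB : forall A B, endo A -> endo B -> endo (br A B))
  (HendoS : forall A B, endo A -> endo B -> endo (A - B))
  (HL0 : L (0, 0))
  (Hperp : forall e, L e <-> (endo e.1 /\
      forall l, L l -> 2^-1 *: (act e.1 l.2 + act l.1 e.2) = 0))
  (Hendopi : forall u, endo (pi u))
  (Hchar : forall e, L e <-> exists X u, [/\ L (X, 0),
      (forall Y, L (Y, 0) -> act Y u = 0) & e = (X + pi u, u)])
  (N : G) (HN : endo N) :
  (forall k, L k -> L (br N k.1, act N k.2)) <->
  (forall X, L (X, 0) -> L (br N X, 0)) /\
  (forall xi eta, (forall Y, L (Y, 0) -> act Y xi = 0) ->
     (forall Y, L (Y, 0) -> act Y eta = 0) ->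
     (forall Y, L (Y, 0) -> act Y (act N xi) = 0) /\
     act N (act (pi xi) eta) = act (pi xi) (act N eta) + act (pi (act N xi)) eta).
Proof.
have HactB : forall A B w, act (A - B) w = act A w - act B w.
  move=> A B w; apply/eqP; rewrite eq_sym subr_eq -HactD subrK //.
have orth : forall Z, L (Z, 0) -> forall l, L l -> act Z l.2 = 0.
  move=> Z /Hperp [_ H] l /H /=; rewrite Hact0 addr0 => /eqP.
  rewrite scaler_eq0 invr_eq0 pnatr_eq0 /= => /eqP //.
have Lpi : forall u, (forall Y, L (Y, 0) -> act Y u = 0) -> L (pi u, u).
  move=> u Du; apply/Hchar; exists 0, u; split => //; rewrite add0r //.
split.
- move=> H; split.
    move=> X LX; have := H _ LX; rewrite /= Hact0 //.
  move=> xi eta Dxi Deta.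
  have /Hchar [Y [v [LY Dv E]]] := H _ (Lpi _ Dxi).
  case: E => E1 E2; rewrite /= in E1 E2; subst v; split => //.
  have hY : Y = br N (pi xi) - pi (act N xi) by rewrite E1 addrK.
  have := orth _ LY _ (Lpi _ Deta); rewrite /= hY HactB Hrep //.
  move/eqP; rewrite subr_eq0 subr_eq => /eqP ->; rewrite addrC //.
- move=> [H1 H2] k Lk; have := Lk; move=> /Hchar [X [u [LX Du Ek]]]; subst k => /=.
  have endoK : endo (X + pi u) by case: ((Hperp (X + pi u, u)).1 Lk).
  apply/Hchar; exists (br N (X + pi u) - pi (act N u)), (act N u).
  have [DNu _] := H2 u u Du Du.
  split => //; last by rewrite subrK.
  apply/Hperp; split; first by apply: HendoS => //; apply: HendoB.
  move=> l /Hchar [Y [v [LY Dv ->]]] /=.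
  have [_ Eq] := H2 u v Du Dv.
  have [DNv _] := H2 v v Dv Dv.
  rewrite Hact0 addr0 HactB Hrep // !HactD (Dv _ LX) (DNv _ LX) !add0r.
  by rewrite Eq -addrA -opprD subrr scaler0.
Qed.

Theorem mainTheorem10 (R : realFieldType) (n0 n1 : nat) (d : 'M[R]_(n0, n1))
  (L0 : E0 R n0 n1 -> Prop) (L1 : E1 R n0 n1 -> Prop)
  (pi0 : V0 R n0 -> gl0 R n0 n1) (pi1 : Vmor R n0 n1 -> gl1 R n0 n1) :
  is_Dirac d L0 L1 -> char_pair d L0 L1 pi0 pi1 ->
  (forall N : gl0 R n0 n1, endo_d d N ->
    (normalizer0 L0 N <->
      (forall X, D0 L0 X -> D0 L0 (br_gl0 N X)) /\
      (forall xi eta, Dann0 L0 xi -> Dann0 L0 eta ->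
         Dann0 L0 (act0 N xi) /\
         act0 N (act0 (pi0 xi) eta)
         = act0 (pi0 xi) (act0 N eta) + act0 (pi0 (act0 N xi)) eta))) /\
  (forall N : gl1 R n0 n1, endo_d d N.1 ->
    (normalizer1 d L1 N <->
      (forall X, D1 L1 X -> D1 L1 (br_gl1 d N X)) /\
      (forall xi eta, Dann1 d L1 xi -> Dann1 d L1 eta ->
         Dann1 d L1 (act1 d N xi) /\
         act1 d N (act1 d (pi1 xi) eta)
         = act1 d (pi1 xi) (act1 d N eta) + act1 d (pi1 (act1 d N xi)) eta))).
Proof.
move=> [[Hs0 [Hs1 _]] [Hp0 Hp1] _ _].
move=> [_ [_ [piend [pist [_ [_ [_ [Hc0 Hc1]]]]]]]].
have endoB0 : forall A B : gl0 R n0 n1, endo_d d A -> endo_d d B ->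
    endo_d d (br_gl0 A B).
  move=> [A1 A2] [B1 B2]; rewrite /endo_d /br_gl0 /= => hA hB.
  rewrite (mulmxBl (A1 *m B1)) (mulmxBr d (A2 *m B2)) -!mulmxA hB hA.
  by rewrite !mulmxA hA hB.
have endoS0 : forall A B : gl0 R n0 n1, endo_d d A -> endo_d d B ->
    endo_d d (A - B).
  move=> [A1 A2] [B1 B2]; rewrite /endo_d /= => hA hB.
  by rewrite (mulmxBl A1) (mulmxBr d A2) hA hB.
split.
- move=> N HN.
  apply: (@generic R (gl0 R n0 n1) (V0 R n0) (endo_d d) (@br_gl0 R n0 n1)
            (@act0 R n0 n1) L0 pi0) => //.
  + by move=> A; rewrite /act0 mulmx0.
  + by move=> A B w; rewrite /act0 mulmxDl.
  + by move=> [A1 A2] [B1 B2] w _ _; rewrite /act0 /= (mulmxBl (A1 *m B1)) !mulmxA.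
  + exact: Hs0.1.
- move=> N HN.
  apply: (@generic R (gl1 R n0 n1) (Vmor R n0 n1) (fun X => endo_d d X.1)
            (br_gl1 d) (act1 d) L1 pi1) => //.
  + move=> A; change ((A.1.1 *m (0 : 'cV[R]_n0), A.1.2 *m (0:'cV[R]_n1) + A.2 *m ((0:'cV[R]_n0) + d *m (0:'cV[R]_n1))) = ((0:'cV[R]_n0),(0:'cV[R]_n1))).
    by rewrite !(mulmx0, addr0, add0r).
  + move=> A B w; rewrite /act1 /= !mulmxDl; congr pair; exact: addrACA.
  + by move=> A B w; apply: rep1.
  + by move=> [A f] [B g] /= hA hB; apply: endoB0.
  + by move=> A B /= hA hB; apply: endoS0.
  + exact: Hs1.1.
  + move=> u /=; have [h _] := pist u; rewrite /srcG in h; rewrite h; apply: piend.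
Qed.
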